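(* Let $G$ be labeled by an $\mathcal{AL}$ labeling $\langle r,d_1,d_2\rangle$, and let $x\neq r$ be a black node that belongs to class $C$ or $D$. Then $\mathit{C\_or\_D}(x)$ returns ``$C$'' iff $x\in C$ and ``$D$'' iff $x\in D$. The robot is in node $x$ when $\mathit{C\_or\_D}(x)$ exits. In the call $\mathit{C\_or\_D}(x)$ the robot needs $O(d_1\log\Delta)$ bits of memory, and the total number of edge traversals is $O(\Delta^{d_1+3})$.
   Context: $G$ is an undirected connected anonymous graph (loops and multiple edges allowed) of maximum degree $\Delta$ and diameter $D$, with ports $0,\dots,\mathtt{deg}(v)-1$ at each node $v$; the robot sees the degree, the color of the current node and the entry port and moves by choosing exit ports. $\mathcal{AL}$ labeling $\langle r,d_1,d_2\rangle$: root $r$; $d(\cdot,\cdot)$ graph distance; integers $d_1\ge 2$, $d_2$ with $\lfloor d_2/2\rfloor\ge d_1$; $q=d_1+d_2+2$; classes $C=\{v:d(r,v)\bmod q=0\}$, $D=\{v:d(r,v)\bmod q=1\}$, $A=\{v:d(r,v)\bmod q=d_2+1\}$, $B=\{v:d(r,v)\bmod q=d_1+d_2+1\}$; nodes of $A\cup B\cup C\cup D$ are black, others white; it is assumed $D\ge d_1+d_2+1$. A $\mathbf{B}$-node is a black node all of whose neighbors are black. White local search from $u$ within radius $\ell$: the recursive procedure $\mathit{WLS}(v,k,\mathit{inport})$, called as $\mathit{WLS}(u,\ell,-1)$: if $k=0$ report $v$; otherwise, if $v$ is black and $k\ne\ell$, return; otherwise for each port $\mathit{outport}\neq\mathit{inport}$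 of $v$ in increasing order, move through it to neighbor $w$, call $\mathit{WLS}(w,k-1,\text{entry port at }w)$, and move back to $v$. Procedure $\mathit{Is\_B}(y)$: if $y$ is a $\mathbf{B}$-node, return ``$\mathbf{B}$-node''. Otherwise perform a white local search from $y$ within radius $d_1$; as soon as a reported node is black and has no $\mathbf{B}$-node neighbor, return ``$B$''; otherwise return ``$D$''. The robot ends at $y$. Procedure $\mathit{C\_or\_D}(x)$: if $x$ is not a $\mathbf{B}$-node, return ``$D$''. Otherwise perform a white local search from $x$ within radius $1$; for each reported black neighbor $y$, run $\mathit{Is\_B}(y)$; as soon as some $\mathit{Is\_B}(y)$ returns ``$B$'', return ``$C$''; if none does, return ``$D$''. The robot ends at $x$. *)

(* Defs.v *)
From mathcomp Require Import all_boot.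
Unset Printing Implicit Defensive.

(* Anonymous port-labelled graphs (loops and multiple edges allowed).       *)
(* Port p < deg v of node v leads to node nbr v p, entering it through      *)
(* port ent v p.                                                            *)
Record pgraph := PGraph {
  pV : finType;
  pdeg : pV -> nat;
  pnbr : pV -> nat -> pV;
  pent : pV -> nat -> nat;
  pax : forall v p, p < pdeg v ->
      [/\ pent v p < pdeg (pnbr v p),
          pnbr (pnbr v p) (pent v p) = v &
          pent (pnbr v p) (pent v p) = p]
}.

Section Graph.
Variable G : pgraph.
Local Notation V := (pV G).
Local Notation deg := (pdeg G).
Local Notation nbr := (pnbr G).
Local Notation ent := (pent G).

Definition ports (v : V) : seq nat := iota 0 (deg v).

Fixpoint reach (k : nat) (u v : V) : bool :=
  if k is k'.+1 then (u == v) || has (fun p => reach k' (nbr u p) v) (ports u)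
  else u == v.

Definition connected : Prop := forall u v : V, exists k, reach k u v.

(* graph distance (correct for connected graphs: any node is reachable
   within #|V| steps) *)
Definition dist (u v : V) : nat := find (fun k => reach k u v) (iota 0 #|V|.+1).

Definition diam : nat := \max_(u : V) \max_(v : V) dist u v.
Definition maxdeg : nat := \max_(v : V) deg v.

Fixpoint follow (v : V) (ms : seq nat) : V :=
  if ms is p :: ms' then follow (nbr v p) ms' else v.

Variables (r : V) (d1 d2 : nat).
Definition qq := d1 + d2 + 2.
Definition inC (v : V) : bool := dist r v %% qq == 0.
Definition inD (v : V) : bool := dist r v %% qq == 1.
Definition inA (v : V) : bool := dist r v %% qq == d2 + 1.
Definition inB (v : V) : bool := dist r v %% qq == d1 + d2 + 1.
Definition black (v : V) : bool := [|| inA v, inB v, inC v | inD v].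
Definition isBnode (v : V) : bool := black v && all (fun p => black (nbr v p)) (ports v).

(* Procedures, as executions: (result, sequence of exit ports taken).      *)
(* Each execution starts and (as we prove) ends at the same node.          *)
Inductive answer := AnsBnode | AnsB | AnsC | AnsD.

Definition answer_eqb (a b : answer) : bool :=
  match a, b with
  | AnsBnode, AnsBnode | AnsB, AnsB | AnsC, AnsC | AnsD, AnsD => true
  | _, _ => false
  end.

Fixpoint scan (g : nat -> bool * seq nat) (ps : seq nat) : bool * seq nat :=
  match ps with
  | [::] => (false, [::])
  | p :: ps' =>
      let (b, ms) := g p in
      if b then (true, ms)
      else let (b', ms') := scan g ps' in (b', ms ++ ms')
  end.

(* Test whether the current node v is a B-node: the robot sees the colour
   of v, and visits every neighbour (and comes back) to see its colour. *)
Definition bnode_test (v : V) : bool * seq nat :=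
  (isBnode v, flatten [seq [:: p; ent v p] | p <- ports v]).

(* White local search WLS(v,k,inport) within radius l; [f] is the action
   performed at each reported node (it returns to that node); the search
   stops as soon as [f] succeeds, the robot backtracking to the start. *)
Fixpoint wls (f : V -> bool * seq nat) (l k : nat) (v : V) (inport : option nat)
  : bool * seq nat :=
  match k with
  | 0 => f v
  | k'.+1 =>
      if black v && (k != l) then (false, [::])
      else scan (fun p =>
                   let w := nbr v p in let e := ent v p in
                   let (b, ms) := wls f l k' w (Some e) in
                   (b, p :: ms ++ [:: e]))
                [seq p <- ports v | Some p != inport]
  end.

Definition isB_report (u : V) : bool * seq nat :=
  if black u then
    let (hasBn, ms) :=
      scan (fun p => let w := nbr u p in let e := ent u p in
                     let (bn, m) := bnode_test w in (bn, p :: m ++ [:: e]))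
           (ports u) in
    (~~ hasBn, ms)
  else (false, [::]).

Definition Is_B (y : V) : answer * seq nat :=
  let (bn, m0) := bnode_test y in
  if bn then (AnsBnode, m0)
  else let (found, m1) := wls isB_report d1 d1 y None in
       (if found then AnsB else AnsD, m0 ++ m1).

Definition CorD_report (y : V) : bool * seq nat :=
  if black y then let (a, m) := Is_B y in (answer_eqb a AnsB, m)
  else (false, [::]).

Definition C_or_D (x : V) : answer * seq nat :=
  let (bn, m0) := bnode_test x in
  if ~~ bn then (AnsD, m0)
  else let (found, m1) := wls CorD_report 1 1 x None in
       (if found then AnsC else AnsD, m0 ++ m1).

End Graph.

(* Memory model: a robot with a memory of bits.  At each step it sees the  *)
(* degree and colour of the current node and the entry port (None if it   *)
(* has not moved yet), updates its memory and either moves through a port *)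
(* or halts with an answer.                                               *)
Inductive action := AMove of nat | AHalt of answer.

Record agent := Agent {
  a_init : seq bool;
  a_step : seq bool -> nat * bool * option nat -> seq bool * action
}.

Fixpoint arun (G : pgraph) (col : pV G -> bool) (A : agent) (fuel : nat)
  (m : seq bool) (v : pV G) (e : option nat)
  : seq (seq bool) * seq nat * option answer :=
  match fuel with
  | 0 => ([:: m], [::], None)
  | fuel'.+1 =>
      let (m', act) := a_step A m (pdeg G v, col v, e) in
      match act with
      | AHalt a => ([:: m; m'], [::], Some a)
      | AMove p =>
          let '(ms, ps, res) := arun G col A fuel' m' (pnbr G v p) (Some (pent G v p)) in
          (m :: ms, p :: ps, res)
      end
  end.

Definition nbits (n : nat) : nat := (trunc_log 2 n).+1.

(* Main.v *)
From Stdlib Require Import PArith.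
Require Import Defs.
From mathcomp Require Import all_boot zify.
Set Implicit Arguments. Unset Strict Implicit.

Section G1.
Variable G : pgraph.
Local Notation V := (pV G).
Local Notation deg := (pdeg G).
Local Notation nbr := (pnbr G).
Local Notation ent := (pent G).
Local Notation reach := (reach G).
Local Notation dist := (dist G).

Lemma mem_ports v p : (p \in ports G v) = (p < deg v).
Proof. by rewrite /ports mem_iota. Qed.

Lemma nbr_ent v p : p < deg v -> nbr (nbr v p) (ent v p) = v.
Proof. by case/(pax G). Qed.
Lemma ent_ent v p : p < deg v -> ent (nbr v p) (ent v p) = p.
Proof. by case/(pax G). Qed.
Lemma ent_lt v p : p < deg v -> ent v p < deg (nbr v p).
Proof. by case/(pax G). Qed.

Lemma reach_refl k u : reach k u u.
Proof. by case: k => [|k] /=; rewrite eqxx. Qed.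

Lemma reach_S k u v : reach k u v -> reach k.+1 u v.
Proof.
elim: k u => [|k IH] u /=; first by move=> ->.
case/orP=> [->//|/hasP[p pP H]]; apply/orP; right; apply/hasP; exists p => //.
exact: IH.
Qed.

Lemma reach_mono k l u v : k <= l -> reach k u v -> reach l u v.
Proof.
move=> /subnKC <-; elim: (l - k) => [|n IH]; first by rewrite addn0.
by move=> H; rewrite addnS; apply: reach_S; apply: IH.
Qed.

Lemma reach_step u p v k : p < deg u -> reach k (nbr u p) v -> reach k.+1 u v.
Proof. by move=> pu H /=; apply/orP; right; apply/hasP; exists p; rewrite ?mem_ports. Qed.

Lemma reach_snoc k u v p : reach k u v -> p < deg v -> reach k.+1 u (nbr v p).
Proof.
elim: k u => [|k IH] u.
  by move=> /eqP -> pv; apply: (reach_step pv); apply: reach_refl.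
rewrite [reach k.+1 _ _]/=; case/orP=> [/eqP -> pv|/hasP[q qP H] pv].
  by apply: (reach_step pv); apply: reach_refl.
rewrite mem_ports in qP; apply: (reach_step qP); exact: IH.
Qed.

Lemma reach_sym k u v : reach k u v -> reach k v u.
Proof.
elim: k u => [|k IH] u /=; first by rewrite eq_sym.
case/orP=> [/eqP ->|/hasP[q qP H]]; first by rewrite eqxx.
rewrite mem_ports in qP.
have := reach_snoc (IH _ H) (ent_lt qP); rewrite nbr_ent //.
Qed.

Definition adj := [rel a b : V | has (fun p => nbr a p == b) (ports G a)].

Lemma reach_path k u v : reach k u v -> exists s, [/\ path adj u s, last u s = v & size s <= k].
Proof.
elim: k u => [|k IH] u /=; first by move=> /eqP ->; exists [::].
case/orP=> [/eqP ->|/hasP[q qP H]]; first by exists [::].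
have [s [P1 P2 P3]] := IH _ H; exists (nbr u q :: s); split => //=.
by rewrite P1 andbT; apply/hasP; exists q.
Qed.

Lemma path_reach u s : path adj u s -> reach (size s) u (last u s).
Proof.
elim: s u => [|w s IH] u /=; first by rewrite eqxx.
case/andP=> /hasP[q qP /eqP E] H; rewrite mem_ports in qP.
by apply: reach_step qP _; rewrite E; apply: IH.
Qed.

Lemma reach_short k u v : reach k u v -> reach #|V| u v.
Proof.
move=> /reach_path [s [P1 P2 _]]; move: P2 => <-.
case: (shortenP P1) => s' P' U' _.
apply: (reach_mono _ (path_reach P')).
have h1 := max_card (mem (u :: s')); move: U' => /card_uniqP h2.
rewrite h2 /= in h1; exact: ltnW.
Qed.

Lemma dist_le k u v : reach k u v -> dist u v <= k.
Proof.
move=> H; rewrite /dist.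
case: (leqP k #|V|) => kV.
  case: (leqP (find (fun k0 => reach k0 u v) (iota 0 #|V|.+1)) k) => // lt.
  have := before_find 0 lt; rewrite nth_iota ?add0n ?H //; lia.
have := find_size (fun k0 => reach k0 u v) (iota 0 #|V|.+1); rewrite size_iota; lia.
Qed.

Lemma dist_reach u v : connected G -> reach (dist u v) u v.
Proof.
move=> /(_ u v) [k /reach_short H]; rewrite /dist.
have hs : has (fun k0 => reach k0 u v) (iota 0 #|V|.+1).
  apply/hasP; exists #|V|; last by [].
  by rewrite mem_iota add0n ltnSn.
have := nth_find 0 hs; rewrite nth_iota //.
have := hs; rewrite has_find size_iota //.
Qed.

Lemma dist_nbr r v p : connected G -> p < deg v -> dist r (nbr v p) <= (dist r v).+1.
Proof. by move=> C pv; apply: dist_le; apply: reach_snoc pv; apply: dist_reach. Qed.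

Lemma dist_nbr' r v p : connected G -> p < deg v -> dist r v <= (dist r (nbr v p)).+1.
Proof.
move=> C pv; have := dist_nbr r C (ent_lt pv); rewrite nbr_ent //.
Qed.

Lemma dist0 r v : connected G -> (dist r v == 0) = (v == r).
Proof.
move=> C; apply/idP/idP => [/eqP E|/eqP ->].
  by have := dist_reach r v C; rewrite E /= eq_sym.
by have := dist_le (reach_refl 0 r); case: (dist r r).
Qed.

Lemma dist_parent r v : connected G -> v != r ->
  exists p, p < deg v /\ (dist r (nbr v p)).+1 = dist r v.
Proof.
move=> C vr; have d0 : dist r v != 0 by rewrite dist0.
have := dist_reach r v C; move: d0.
case E: (dist r v) => [//|d] _ /reach_sym /=.
have rv : (v == r) = false by apply/negbTE.
rewrite rv /= => /hasP[p pP H]; rewrite mem_ports in pP.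
exists p; split => //.
have h1 := dist_le (reach_sym H); have h2 := dist_nbr' r C pP; lia.
Qed.

Lemma deg_max v : deg v <= maxdeg G.
Proof. rewrite /maxdeg; exact: (@leq_bigmax _ (fun v => deg v) v). Qed.

End G1.
Set Implicit Arguments. Unset Strict Implicit.

Lemma let_fst (A B C : Type) (x : A * B) (h : B -> C) :
  (let (b, ms) := x in (b, h ms)).1 = x.1.
Proof. by case: x. Qed.

Lemma let_snd (A B C : Type) (x : A * B) (h : B -> C) :
  (let (b, ms) := x in (b, h ms)).2 = h x.2.
Proof. by case: x. Qed.

Lemma scan_res g ps : (scan g ps).1 = has (fun p => (g p).1) ps.
Proof.
elim: ps => [|p ps IH] //=; case: (g p) => b ms /=.
by case: b => //=; case: (scan g ps) IH => b' ms' /= ->.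
Qed.

Lemma scan_size g ps B : (forall p, p \in ps -> size (g p).2 <= B) ->
  size (scan g ps).2 <= size ps * B.
Proof.
elim: ps => [|p ps IH] //= H.
have Hp := H p (mem_head _ _); have {}IH : size (scan g ps).2 <= size ps * B.
  by apply: IH => x xin; apply: H; rewrite inE xin orbT.
move: Hp; case: (g p) => b ms /= Hp; case: b => /=; first by rewrite mulSn; lia.
case: (scan g ps) IH => b' ms' /= IH; rewrite size_cat mulSn; lia.
Qed.

Section Correct.
Variables (G : pgraph) (r : pV G) (d1 d2 : nat).
Hypothesis (C : connected G) (H1 : 2 <= d1) (H2 : d1 <= d2./2).
Local Notation V := (pV G).
Local Notation deg := (pdeg G).
Local Notation nbr := (pnbr G).
Local Notation ent := (pent G).
Local Notation d v := (dist G r v).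
Local Notation q := (d1 + d2 + 2).
Local Notation black := (black G r d1 d2).
Local Notation isBnode := (isBnode G r d1 d2).

Lemma qq_eq : qq d1 d2 = q. Proof. by []. Qed.

Lemma black_res v : black v =
  [|| d v %% q == d2 + 1, d v %% q == d1 + d2 + 1, d v %% q == 0 | d v %% q == 1].
Proof. by []. Qed.

Lemma win B n : B %% q = 0 -> B <= n -> n < B + q -> n %% q = n - B.
Proof.
move=> hB h1 h2; rewrite -{1}(subnKC h1) -modnDml hB add0n modn_small //; lia.
Qed.

Lemma base_mod n : (n - n %% q) %% q = 0.
Proof. by rewrite {1}(divn_eq n q) addnK modnMl. Qed.

Lemma base_le n : n %% q <= n.
Proof. exact: leq_mod. Qed.

Lemma res_lt n : n %% q < q.
Proof. by rewrite ltn_pmod // addn2. Qed.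

Lemma nbr_win v p : p < deg v -> d v <= (d (nbr v p)).+1 /\ d (nbr v p) <= (d v).+1.
Proof. by move=> pv; split; [apply: dist_nbr' | apply: dist_nbr]. Qed.

Lemma modq_add B : B %% q = 0 -> (B + q) %% q = 0.
Proof. by move=> h; rewrite modnDr. Qed.

Lemma C_base v : d v %% q = 0 -> v != r -> q <= d v /\ (d v - q) %% q = 0.
Proof.
move=> h vr; have d0 : d v != 0 by rewrite dist0.
have qd : q <= d v.
  case: (leqP q (d v)) => // lt; move: h; rewrite modn_small //; lia.
split => //; move: h; rewrite -{1}(subnKC qd) -modnDml modnn add0n.
by [].
Qed.

Lemma C_Bnode v : d v %% q = 0 -> isBnode v.
Proof.
move=> hv; rewrite /isBnode; have -> : black v by rewrite black_res hv eqxx !orbT.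
apply/allP => p; rewrite mem_ports => pv; have [h1 h2] := nbr_win pv.
rewrite black_res.
case: (eqVneq v r) => [E|vr].
  have : d v = 0 by apply/eqP; rewrite dist0 // E.
  move=> dv0; rewrite modn_small; lia.
have [qd hB] := C_base hv vr.
have E : d v = (d v - q) + q by lia.
case: (leqP (d v) (d (nbr v p))) => h3.
  rewrite (@win (d v - q + q)) ?modq_add //; lia.
rewrite (@win (d v - q)) //; lia.
Qed.

Lemma white_not_Bnode v : ~~ black v -> ~~ isBnode v.
Proof. by rewrite /isBnode => /negbTE ->. Qed.

Lemma A_not_Bnode w : d w %% q = d2 + 1 -> ~~ isBnode w.
Proof.
move=> hw; have wr : w != r.
  by rewrite -(dist0 r w C); apply/negP => /eqP E; move: hw; rewrite E mod0n; lia.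
have [p [pw E]] := dist_parent C wr.
rewrite /isBnode; apply/negP => /andP[_ /allP /(_ p)]; rewrite mem_ports => /(_ pw).
have h1 := res_lt (d w); have h2 := base_le (d w).
rewrite black_res (@win (d w - d w %% q) (d (nbr w p))) ?base_mod; lia.
Qed.

Lemma bnode_test_fst v : (bnode_test G r d1 d2 v).1 = isBnode v.
Proof. by []. Qed.

Lemma isB_report_fst u : (isB_report G r d1 d2 u).1 =
  black u && ~~ has (fun p => isBnode (nbr u p)) (ports G u).
Proof.
rewrite /isB_report; case: (black u) => //=.
set s := scan _ _; have : s.1 = has (fun p => isBnode (nbr u p)) (ports G u).
  by rewrite /s scan_res; apply: eq_has => p /=; case: (bnode_test G r d1 d2 (nbr u p)).
by case: s => b ms /= ->.
Qed.

Lemma D_report u : d u %% q = 1 -> (isB_report G r d1 d2 u).1 = false.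
Proof.
move=> hu; rewrite isB_report_fst; apply/negbTE; rewrite negb_and negbK.
have ur : u != r.
  by rewrite -(dist0 r u C); apply/negP => /eqP E; move: hu; rewrite E mod0n.
have [p [pu E]] := dist_parent C ur.
apply/orP; right; apply/hasP; exists p; rewrite ?mem_ports //.
apply: C_Bnode; have h1 := res_lt (d u); have h2 := base_le (d u).
rewrite (@win (d u - d u %% q) (d (nbr u p))) ?base_mod; lia.
Qed.

Lemma A_report u : d u %% q = d2 + 1 -> (isB_report G r d1 d2 u).1 = true.
Proof.
move=> hu; rewrite isB_report_fst black_res hu eqxx /=.
apply/hasP => [[p]]; rewrite mem_ports => pu.
have [h1 h2] := nbr_win pu.
have hB := base_mod (d u); have hb := base_le (d u); have hr := res_lt (d u).
have hw : d (nbr u p) %% q = d (nbr u p) - (d u - d u %% q).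
  rewrite (@win (d u - d u %% q) (d (nbr u p))) //; lia.
case: (eqVneq (d (nbr u p) %% q) (d2 + 1)) => [/A_not_Bnode /negbTE -> //|ne].
apply/negP; apply: white_not_Bnode.
rewrite black_res hw; rewrite hw in ne; lia.
Qed.

Lemma wls_sound (f : V -> bool * seq nat) l (P : nat -> V -> Prop) :
  (forall k v p, P k.+1 v -> ~~ (black v && (k.+1 != l)) -> p < deg v -> P k (nbr v p)) ->
  forall k v i, P k v -> (wls G r d1 d2 f l k v i).1 -> exists u, P 0 u /\ (f u).1.
Proof.
move=> HP; elim=> [|k IH] v i Pv /=; first by exists v.
case: ifP => hb //.
rewrite scan_res => /hasP [p]; rewrite mem_filter mem_ports => /andP[_ pv].
have {}HP' := HP _ _ _ Pv (negbT hb) pv.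
case E: (wls G r d1 d2 f l k (nbr v p) (Some (ent v p))) => [b ms] /= hb'.
by apply: (IH _ (Some (ent v p)) HP'); rewrite E.
Qed.

Lemma wls_complete (f : V -> bool * seq nat) l (P : nat -> V -> option nat -> Prop) :
  (forall v i, P 0 v i -> (f v).1) ->
  (forall k v i, P k.+1 v i -> ~~ (black v && (k.+1 != l)) /\
     exists p, [/\ p < deg v, Some p != i & P k (nbr v p) (Some (ent v p))]) ->
  forall k v i, P k v i -> (wls G r d1 d2 f l k v i).1.
Proof.
move=> H0 HP; elim=> [|k IH] v i Pv /=; first exact: H0 Pv.
have [hb [p [pv pi Pw]]] := HP _ _ _ Pv.
rewrite (negbTE hb) scan_res; apply/hasP; exists p.
  by rewrite mem_filter mem_ports pv pi.
have := IH _ _ Pw; case: (wls G r d1 d2 f l k (nbr v p) (Some (ent v p))) => b ms //.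
Qed.

Lemma CorD_fst y : (CorD_report G r d1 d2 y).1 =
  black y && answer_eqb (Is_B G r d1 d2 y).1 AnsB.
Proof. by rewrite /CorD_report; case: (black y) => //; case: (Is_B G r d1 d2 y). Qed.

Lemma IsB_C y : d y %% q = 0 -> (Is_B G r d1 d2 y).1 = AnsBnode.
Proof. by move=> hy; rewrite /Is_B /bnode_test C_Bnode. Qed.

Lemma dpos v : 0 < d v -> v != r.
Proof. by move=> h; rewrite -(dist0 r v C); lia. Qed.

Lemma IsB_D y : d y %% q = 1 -> (Is_B G r d1 d2 y).1 <> AnsB.
Proof.
move=> hy; rewrite /Is_B /bnode_test /=; case: (isBnode y) => //.
case E: (wls G r d1 d2 (isB_report G r d1 d2) d1 d1 y None) => [found m1] /=.
case: found E => //= E _.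
have hb := base_le (d y); have hB := base_mod (d y); rewrite hy in hb hB.
set B := d y - 1 in hB.
pose P := (fun k v => [/\ k <= d1, B <= d v <= B + 1 + (d1 - k), (k = d1 -> d v = B + 1)
                 & (k = 0 -> B + 1 <= d v)]).
have Hstep : forall k v p, P k.+1 v -> ~~ (black v && (k.+1 != d1)) -> p < deg v -> P k (nbr v p).
  move=> k v p [hk hd h1 h0] hbl pv; have [n1 n2] := nbr_win pv.
  case: (eqVneq k.+1 d1) => ek.
    have := h1 ek; split; lia.
  move: hbl; rewrite ek andbT black_res (@win B (d v)) //; try lia.
  move=> hbl; split; lia.
have HPy : P d1 y by split; lia.
have HE : (wls G r d1 d2 (isB_report G r d1 d2) d1 d1 y None).1 by rewrite E.
have [u []] := wls_sound Hstep HPy HE.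
move=> [hk hd _ h0] hr.
have hu : d u %% q = d u - B by rewrite (@win B (d u)) //; lia.
have hbl : black u by move: hr; rewrite isB_report_fst => /andP[].
have h1 : d u %% q = 1 by move: hbl; rewrite black_res hu; lia.
by move: hr; rewrite D_report.
Qed.

Lemma IsB_B y B : B %% q = 0 -> d y = B + q - 1 -> (Is_B G r d1 d2 y).1 = AnsB.
Proof.
move=> hB hy; rewrite /Is_B /bnode_test /=.
have yr : y != r by apply: dpos; lia.
have [p0 [p0y E0]] := dist_parent C yr.
have -> : isBnode y = false.
  apply/negbTE; rewrite /isBnode negb_and; apply/orP; right.
  apply/allPn; exists p0; rewrite ?mem_ports //.
  rewrite black_res (@win B (d (nbr y p0))) //; lia.
case E: (wls G r d1 d2 (isB_report G r d1 d2) d1 d1 y None) => [found m1] /=.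
case: found E => // E.
pose P := (fun k v i => [/\ k <= d1, d v = B + d2 + 1 + k &
       (i = None \/ exists e, [/\ i = Some e, e < deg v & d (nbr v e) = (d v).+1])]).
have H0 : forall v i, P 0 v i -> (isB_report G r d1 d2 v).1.
  move=> v i [_ hv _]; rewrite A_report //; rewrite (@win B (d v)) //; lia.
have Hstep : forall k v i, P k.+1 v i -> ~~ (black v && (k.+1 != d1)) /\
     exists p, [/\ p < deg v, Some p != i & P k (nbr v p) (Some (ent v p))].
  move=> k v i [hk hv hi]; split.
    case: (eqVneq k.+1 d1) => ek; first by rewrite andbF.
    rewrite andbT black_res (@win B (d v)) //; lia.
  have vr : v != r by apply: dpos; lia.
  have [p [pv Ep]] := dist_parent C vr.
  exists p; split => //.
    case: hi => [->//|[e [-> ev de]]]; apply/eqP => [[pe]].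
    by move: Ep; rewrite pe de; lia.
  split; first lia; first lia.
  right; exists (ent v p); split => //; first exact: ent_lt.
  by rewrite nbr_ent.
have HPy : P d1 y None by split => //; [lia | by left].
by have := wls_complete H0 Hstep HPy; rewrite E.
Qed.

Lemma CorD_C x : d x %% q = 0 -> x != r -> (C_or_D G r d1 d2 x).1 = AnsC.
Proof.
move=> hx xr; rewrite /C_or_D /bnode_test.
case E: (wls G r d1 d2 (CorD_report G r d1 d2) 1 1 x None) => [found m1].
rewrite C_Bnode //=.
case: found E => // E.
have [qd hB] := C_base hx xr.
have [p0 [p0x E0]] := dist_parent C xr.
pose P := (fun k v (i : option nat) => [/\ k = 1, v = x & i = None] \/ (k = 0 /\ v = nbr x p0)).
have H0 : forall v i, P 0 v i -> (CorD_report G r d1 d2 v).1.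
  move=> v i [[]//|[_ ->]]; rewrite CorD_fst.
  rewrite (@IsB_B _ (d x - q)) //; last by lia.
  rewrite black_res (@win (d x - q) (d (nbr x p0))) //=; lia.
have Hstep : forall k v i, P k.+1 v i -> ~~ (black v && (k.+1 != 1)) /\
     exists p, [/\ p < deg v, Some p != i & P k (nbr v p) (Some (ent v p))].
  move=> k v i [[[ek] -> ->]|[]//]; split; first by rewrite ek eqxx andbF.
  by exists p0; split => //; rewrite /P ek; right.
have HPx : P 1 x None by rewrite /P; left.
by have := wls_complete H0 Hstep HPx; rewrite E.
Qed.

Lemma CorD_D x : d x %% q = 1 -> (C_or_D G r d1 d2 x).1 = AnsD.
Proof.
move=> hx.
have hb := base_le (d x); have hB := base_mod (d x); rewrite hx in hb hB.
have key : (wls G r d1 d2 (CorD_report G r d1 d2) 1 1 x None).1 = false.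
  rewrite /= andbF scan_res; apply/hasPn => p.
  rewrite mem_filter mem_ports => /andP[_ pv].
  case E: (CorD_report G r d1 d2 (nbr x p)) => [b ms] /=; move: E.
  have [n1 n2] := nbr_win pv.
  have hw : d (nbr x p) %% q = d (nbr x p) - (d x - 1).
    rewrite (@win (d x - 1) (d (nbr x p))) //; lia.
  move/(f_equal fst); rewrite CorD_fst /= => <-.
  case hbl: (black (nbr x p)) => //=.
  move: hbl; rewrite black_res hw => hbl.
  have : (d (nbr x p) %% q = 0) \/ (d (nbr x p) %% q = 1) by rewrite hw; lia.
  case=> [/IsB_C -> //|/IsB_D].
  by case: (Is_B G r d1 d2 (nbr x p)).1.
rewrite /C_or_D /bnode_test.
case: (wls G r d1 d2 (CorD_report G r d1 d2) 1 1 x None) key => [found m1] /= ->.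
by case: (isBnode x).
Qed.

End Correct.
Set Implicit Arguments. Unset Strict Implicit.

Section Moves.
Variables (G : pgraph) (r : pV G) (d1 d2 : nat).
Local Notation V := (pV G).
Local Notation deg := (pdeg G).
Local Notation nbr := (pnbr G).
Local Notation ent := (pent G).
Local Notation D := (maxdeg G).

Lemma bt_size v : size (bnode_test G r d1 d2 v).2 = 2 * deg v.
Proof.
rewrite /bnode_test /= /ports; elim: (deg v) => [|n IH] //.
by rewrite -addn1 iotaD map_cat flatten_cat size_cat IH /=; lia.
Qed.

Lemma size_ports v : size (ports G v) = deg v.
Proof. by rewrite size_iota. Qed.

Lemma report_size u : size (isB_report G r d1 d2 u).2 <= D * (2 * D + 2).
Proof.
rewrite /isB_report; case: (black G r d1 d2 u) => //=.
set s := scan _ _.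
have : size s.2 <= D * (2 * D + 2).
  apply: leq_trans (scan_size (B := 2 * D + 2) _) _.
    move=> p _ /=; have := bt_size (nbr u p); rewrite /bnode_test /= size_cat /= => ->.
    have := deg_max (nbr u p); lia.
  rewrite size_ports; have := deg_max u; nia.
by case: s => b ms.
Qed.

Lemma pow_ge k : D <= D ^ k.+1.
Proof.
case: D => [|n] //; rewrite expnS; have : 0 < n.+1 ^ k by rewrite expn_gt0.
nia.
Qed.

Lemma filter_size v e : e < deg v ->
  size [seq p <- ports G v | Some p != Some e] <= (deg v).-1.
Proof.
move=> ev; rewrite size_filter.
have := count_predC (fun p => Some p != Some e) (ports G v).
have : 0 < count (predC (fun p => Some p != Some e)) (ports G v).
  by rewrite -has_count; apply/hasP; exists e; rewrite ?mem_ports //= eqxx.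
rewrite size_ports; lia.
Qed.

Lemma wls_size k v e : e < deg v ->
  size (wls G r d1 d2 (isB_report G r d1 d2) d1 k v (Some e)).2 <= 4 * D ^ k.+2.
Proof.
elim: k v e => [|k IH] v e ev /=.
  apply: leq_trans (report_size v) _; nia.
case: ifP => _ //.
apply: leq_trans (scan_size (B := 4 * D ^ k.+2 + 2) _) _.
  move=> p; rewrite mem_filter mem_ports => /andP[_ pv].
  case E: (wls G r d1 d2 (isB_report G r d1 d2) d1 k (nbr v p) (Some (ent v p))) => [b ms] /=.
  have := IH _ _ (ent_lt pv); rewrite E /= size_cat /=; lia.
have h1 := filter_size ev; have h2 := deg_max v; have h3 := pow_ge k.+1.
rewrite [D ^ k.+3]expnS.
apply: leq_trans (leq_mul h1 (leqnn _)) _.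
nia.
Qed.

Lemma wls_top_size y : 0 < d1 ->
  size (wls G r d1 d2 (isB_report G r d1 d2) d1 d1 y None).2 <= D * (4 * D ^ d1.+1 + 2).
Proof.
move=> hd; have E : d1 = (d1.-1).+1 by lia.
rewrite {4}E /=; case: ifP => _ //.
apply: leq_trans (scan_size (B := 4 * D ^ d1.+1 + 2) _) _.
  move=> p; rewrite mem_filter mem_ports => /andP[_ pv].
  case E2: (wls G r d1 d2 (isB_report G r d1 d2) d1 d1.-1 (nbr y p) (Some (ent y p))) => [b ms] /=.
  have := wls_size d1.-1 (ent_lt pv); rewrite E2 /= size_cat /= -E; lia.
have h1 : size [seq p <- ports G y | Some p != None] <= D.
  by rewrite size_filter; apply: leq_trans (count_size _ _) _; rewrite size_ports deg_max.
by apply: leq_mul.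
Qed.

Lemma IsB_size y : 0 < d1 -> size (Is_B G r d1 d2 y).2 <= 2 * D + D * (4 * D ^ d1.+1 + 2).
Proof.
move=> hd; rewrite /Is_B; have := bt_size y; have := wls_top_size y hd.
have := deg_max y.
case: (bnode_test G r d1 d2 y) => bn m0 /=.
case: bn => /=; first lia.
case: (wls G r d1 d2 (isB_report G r d1 d2) d1 d1 y None) => b m1 /=.
rewrite size_cat; lia.
Qed.

Lemma CorD_size x : 0 < d1 -> size (C_or_D G r d1 d2 x).2 <= 12 * D ^ (d1 + 3).
Proof.
move=> hd.
have hw : size (wls G r d1 d2 (CorD_report G r d1 d2) 1 1 x None).2 <=
   D * (2 + (2 * D + D * (4 * D ^ d1.+1 + 2))).
  rewrite /= andbF; apply: leq_trans (scan_size (B := 2 + (2 * D + D * (4 * D ^ d1.+1 + 2))) _) _.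
    move=> p _.
    case E: (CorD_report G r d1 d2 (nbr x p)) => [b ms] /=.
    have : size ms <= 2 * D + D * (4 * D ^ d1.+1 + 2).
      move: E; rewrite /CorD_report; case: (black G r d1 d2 (nbr x p)); last by case=> _ <-.
      have := IsB_size (nbr x p) hd.
      by case: (Is_B G r d1 d2 (nbr x p)) => a m /= h [_ <-].
    rewrite size_cat /=; lia.
  apply: leq_mul => //.
  by rewrite size_filter; apply: leq_trans (count_size _ _) _; rewrite size_ports deg_max.
rewrite /C_or_D; have h1 := deg_max x; have := bt_size x.
move: hw; case: (wls G r d1 d2 (CorD_report G r d1 d2) 1 1 x None) => b m1 /= hw.
case: (bnode_test G r d1 d2 x) => bn m0 /= h2.
have p1 := pow_ge d1.
have E3 : D ^ (d1 + 3) = D * (D * D ^ d1.+1).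
  by rewrite -!expnS; congr (_ ^ _); lia.
rewrite E3; move: p1 hw; set X := D ^ d1.+1 => p1 hw.
have hX : D * D <= D * D * X.
  case: (posnP D) => [->//|Dp]; rewrite -{1}(muln1 (D * D)) leq_mul2l; lia.
have hD : D <= D * D by case: D => // n; nia.
case: (isBnode G r d1 d2 x) => /=; rewrite ?size_cat h2; nia.
Qed.

End Moves.
Set Implicit Arguments. Unset Strict Implicit.

Inductive mode := MStart | MProbe | MPBack | MArrive | MBack of bool.
Definition state := (mode * bool * seq nat)%type.
Definition st_halt : state := (MStart, false, [::]).

Section Machine.
Variable l : nat.

Definition skipP (P : seq nat) (q : nat) : bool := (2 <= size P <= l) && (q == head 0 P).

Definition fin_scan (P : seq nat) : state * action :=
  if size P == 0 then (st_halt, AHalt AnsD)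
  else if size P == l.+1 then ((MBack true, false, behead P), AMove (head 0 P))
  else ((MBack false, false, behead P), AMove (head 0 P)).

Definition found_act (P : seq nat) : state * action :=
  if size P == 0 then (st_halt, AHalt AnsC)
  else if size P == l.+1 then ((MBack false, false, behead P), AMove (head 0 P))
  else ((MBack true, false, behead P), AMove (head 0 P)).

Definition cont_scan (P : seq nat) (g q : nat) : state * action :=
  let q' := if skipP P q then q.+1 else q in
  if q' < g then ((MArrive, false, P), AMove q') else fin_scan P.

Definition fin_bt (P : seq nat) (acc : bool) (g : nat) : state * action :=
  match size P with
  | 0 => if acc then cont_scan P g 0 else (st_halt, AHalt AnsD)
  | 1 => if acc then ((MBack false, false, behead P), AMove (head 0 P)) else cont_scan P g 0
  | _ => ((MBack acc, false, behead P), AMove (head 0 P))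
  end.

Definition cont_bt (P : seq nat) (acc : bool) (g q : nat) : state * action :=
  if q < g then ((MProbe, acc, P), AMove q) else fin_bt P acc g.

Definition astep (s : state) (i : nat * bool * option nat) : state * action :=
  let: (g, c, e) := i in
  let: (m, acc, P) := s in
  match m with
  | MStart => cont_bt [::] c g 0
  | MProbe => ((MPBack, acc && c, P), AMove (odflt 0 e))
  | MPBack => cont_bt P acc g (odflt 0 e).+1
  | MArrive =>
      let e' := odflt 0 e in
      if size P == 0 then
        (if c then cont_bt [:: e'] true g 0 else ((MBack false, false, P), AMove e'))
      else if size P < l then
        (if c then ((MBack false, false, P), AMove e') else cont_scan (e' :: P) g 0)
      else if size P == l then
        (if c then cont_scan (e' :: P) g 0 else ((MBack false, false, P), AMove e'))
      else cont_bt (e' :: P) c g 0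
  | MBack b => if b then found_act P else cont_scan P g (odflt 0 e).+1
  end.

End Machine.

Section Sim.
Variables (G : pgraph) (r : pV G) (d1 d2 : nat).
Hypothesis (H1 : 2 <= d1).
Local Notation V := (pV G).
Local Notation deg := (pdeg G).
Local Notation nbr := (pnbr G).
Local Notation ent := (pent G).
Local Notation col := (black G r d1 d2).
Local Notation astep := (astep d1).

Definition okP (P : seq nat) := (size P <= d1.+2) && all (fun n => n < maxdeg G) P.
Definition okS (s : state) := okP s.2.

Inductive Steps : state -> V -> option nat -> seq nat -> state -> V -> option nat -> Prop :=
| Snil s v e : Steps s v e [::] s v e
| Scons s v e s1 p ps s2 v2 e2 : okS s -> astep s (deg v, col v, e) = (s1, AMove p) ->
    Steps s1 (nbr v p) (Some (ent v p)) ps s2 v2 e2 -> Steps s v e (p :: ps) s2 v2 e2.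

Lemma Steps_trans s v e ps s1 v1 e1 ps' s2 v2 e2 :
  Steps s v e ps s1 v1 e1 -> Steps s1 v1 e1 ps' s2 v2 e2 -> Steps s v e (ps ++ ps') s2 v2 e2.
Proof.
elim=> {s v e ps s1 v1 e1} [//|s v e s1 p ps s3 v3 e3 ok st _ IH] H.
by apply: Scons ok st _; apply: IH.
Qed.

Lemma Steps_one s v e s1 p : okS s -> astep s (deg v, col v, e) = (s1, AMove p) ->
  Steps s v e [:: p] s1 (nbr v p) (Some (ent v p)).
Proof. by move=> ok st; apply: Scons ok st (Snil _ _ _). Qed.

Lemma Steps_follow s v e ps s' v' e' : Steps s v e ps s' v' e' -> follow G v ps = v'.
Proof. by elim=> //= s0 v0 e0 s1 p ps0 s2 v2 e2 _ _ _ ->. Qed.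

Lemma bt_loop v P : okP P -> forall n q (acc : bool) s e, deg v - q = n -> okS s ->
  astep s (deg v, col v, e) = cont_bt d1 P acc (deg v) q ->
  exists s' e', [/\ okS s', Steps s v e (flatten [seq [:: p; ent v p] | p <- iota q n]) s' v e' &
     astep s' (deg v, col v, e') =
       fin_bt d1 P (acc && all (fun p => col (nbr v p)) (iota q n)) (deg v)].
Proof.
move=> okp; elim=> [|n IH] q acc s e hn oks st.
  exists s, e; split => //; first exact: Snil.
  by rewrite st /cont_bt /= andbT ifF //; apply/negbTE; rewrite -leqNgt; lia.
have qg : q < deg v by lia.
have st1 : astep s (deg v, col v, e) = ((MProbe, acc, P), AMove q) by rewrite st /cont_bt qg.
set z := nbr v q.
have st2 : astep (MProbe, acc, P) (deg z, col z, Some (ent v q)) =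
           ((MPBack, acc && col z, P), AMove (ent v q)) by [].
have st3 : astep (MPBack, acc && col z, P) (deg v, col v, Some q) =
           cont_bt d1 P (acc && col z) (deg v) q.+1 by [].
have [s' [e' [ok' S' st']]] := IH q.+1 (acc && col z) _ _ (ltac:(lia)) (okp : okS (MPBack, acc && col z, P)) st3.
exists s', e'; split => //.
  rewrite /= -cat1s.
  apply: Steps_trans (Steps_one oks st1) _; rewrite -cat1s.
  have := Steps_one (v := z) (e := Some (ent v q)) (okp : okS (MProbe, acc, P)) st2.
  rewrite /z nbr_ent // ent_ent // => S2.
  by apply: Steps_trans S2 S'.
by rewrite st' /= andbA.
Qed.

Lemma skip_next P q : skipP d1 P q -> skipP d1 P q.+1 = false.
Proof. by rewrite /skipP => /andP[-> /eqP <-] /=; rewrite gtn_eqF. Qed.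

Lemma cont_scan_skip P g q : skipP d1 P q -> cont_scan d1 P g q = cont_scan d1 P g q.+1.
Proof. by move=> sk; rewrite /cont_scan sk (skip_next sk). Qed.

Definition wrap (v : V) (F : nat -> bool * seq nat) (p : nat) : bool * seq nat :=
  ((F p).1, p :: (F p).2 ++ [:: ent v p]).

Lemma scan_cons_wrap v F q rest :
  scan (wrap v F) (q :: rest) =
  if (F q).1 then (true, q :: (F q).2 ++ [:: ent v q])
  else ((scan (wrap v F) rest).1, (q :: (F q).2 ++ [:: ent v q]) ++ (scan (wrap v F) rest).2).
Proof.
rewrite /=; case: (scan (wrap v F) rest) => b' ms'; rewrite /wrap.
by case: (F q) => [[] ms].
Qed.

Lemma scan_loop v P (F : nat -> bool * seq nat) : okP P ->
  (forall p, p < deg v -> ~~ skipP d1 P p ->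
     Steps (MArrive, false, P) (nbr v p) (Some (ent v p)) ((F p).2 ++ [:: ent v p])
           (MBack (F p).1, false, P) v (Some p)) ->
  forall n q s e, deg v - q = n -> okS s ->
  astep s (deg v, col v, e) = cont_scan d1 P (deg v) q ->
  exists s' e', [/\ okS s',
    Steps s v e (scan (wrap v F) [seq p <- iota q n | ~~ skipP d1 P p]).2 s' v e' &
    astep s' (deg v, col v, e') =
      if (scan (wrap v F) [seq p <- iota q n | ~~ skipP d1 P p]).1 then found_act d1 P
      else fin_scan d1 P].
Proof.
move=> okp HF; elim=> [|n IH] q s e hn oks st.
  exists s, e; split => //; first exact: Snil.
  rewrite st /= /cont_scan ifF //; apply/negbTE; rewrite -leqNgt; case: ifP => _; lia.
have qg : q < deg v by lia.
have -> : iota q n.+1 = q :: iota q.+1 n by [].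
case sk: (skipP d1 P q).
  have -> : [seq p <- q :: iota q.+1 n | ~~ skipP d1 P p] = [seq p <- iota q.+1 n | ~~ skipP d1 P p].
    by rewrite /= sk.
  rewrite cont_scan_skip // in st.
  exact: IH q.+1 s e (ltac:(lia)) oks st.
have st1 : astep s (deg v, col v, e) = ((MArrive, false, P), AMove q).
  by rewrite st /cont_scan sk qg.
have Sc := HF q qg (negbT sk).
have S1 := Steps_trans (Steps_one oks st1) Sc.
have -> : [seq p <- q :: iota q.+1 n | ~~ skipP d1 P p] = q :: [seq p <- iota q.+1 n | ~~ skipP d1 P p].
  by rewrite /= sk.
rewrite scan_cons_wrap.
case Fb: (F q).1; rewrite Fb in S1.
  exists (MBack true, false, P), (Some q); split => //.
have st2 : astep (MBack false, false, P) (deg v, col v, Some q) = cont_scan d1 P (deg v) q.+1 by [].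
have [s' [e' [ok' S' st']]] := IH q.+1 _ _ (ltac:(lia)) (okp : okS (MBack false, false, P)) st2.
exists s', e'; split => //.
by rewrite /= -cat_cons; apply: Steps_trans S1 S'.
Qed.

Lemma okP_cons v p P : p < deg v -> okP P -> size P < d1.+2 -> okP (ent v p :: P).
Proof.
move=> pv /andP[h1 h2] h3; rewrite /okP /= h2 andbT.
have := ent_lt pv; have := deg_max (nbr v p); lia.
Qed.

Lemma W_child v p P : size P = d1.+1 -> okP P -> p < deg v ->
  Steps (MArrive, false, P) (nbr v p) (Some (ent v p))
    ((bnode_test G r d1 d2 (nbr v p)).2 ++ [:: ent v p])
    (MBack (bnode_test G r d1 d2 (nbr v p)).1, false, P) v (Some p).
Proof.
move=> hP okp pv; set w := nbr v p; set e := ent v p.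
have okp' : okP (e :: P) by apply: okP_cons => //; lia.
have st : astep (MArrive, false, P) (deg w, col w, Some e) = cont_bt d1 (e :: P) (col w) (deg w) 0.
  have h1 : (d1.+1 < d1) = false by apply/negbTE; lia.
  have h2 : (d1.+1 == d1) = false by apply/negbTE; lia.
  by rewrite /= hP h1 h2.
have [s' [e' [ok' S' st']]] := @bt_loop w (e :: P) okp' (deg w) 0 (col w) _ _ (subn0 _)
   (okp : okS (MArrive, false, P)) st.
rewrite /fin_bt /= hP in st'.
have S2 := Steps_one ok' st'.
rewrite /w /e nbr_ent // ent_ent // in S2.
exact: Steps_trans S' S2.
Qed.

Lemma scan_ext (g1 g2 : nat -> bool * seq nat) ps : (forall p, g1 p = g2 p) -> scan g1 ps = scan g2 ps.
Proof. by move=> H; elim: ps => //= p ps IH; rewrite H IH. Qed.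

Lemma filter_noskip P n : ~~ (2 <= size P <= d1) ->
  [seq p <- iota 0 n | ~~ skipP d1 P p] = iota 0 n.
Proof.
move=> h; rewrite (@eq_filter _ _ predT) ?filter_predT // => p.
by rewrite /skipP (negbTE h).
Qed.

Lemma U_child v p P : size P = d1 -> okP P -> p < deg v ->
  Steps (MArrive, false, P) (nbr v p) (Some (ent v p))
    ((isB_report G r d1 d2 (nbr v p)).2 ++ [:: ent v p])
    (MBack (isB_report G r d1 d2 (nbr v p)).1, false, P) v (Some p).
Proof.
move=> hP okp pv; set u := nbr v p; set e := ent v p.
have n0 : (size P == 0) = false by apply/negbTE; lia.
have n1 : (size P < d1) = false by apply/negbTE; lia.
case cu: (col u).
  have okp' : okP (e :: P) by apply: okP_cons => //; lia.
  have st : astep (MArrive, false, P) (deg u, col u, Some e) = cont_scan d1 (e :: P) (deg u) 0.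
    by rewrite /= n0 n1 hP eqxx cu.
  have HF : forall q, q < deg u -> ~~ skipP d1 (e :: P) q ->
     Steps (MArrive, false, e :: P) (nbr u q) (Some (ent u q))
       ((bnode_test G r d1 d2 (nbr u q)).2 ++ [:: ent u q])
       (MBack (bnode_test G r d1 d2 (nbr u q)).1, false, e :: P) u (Some q).
    by move=> q qu _; apply: W_child => //=; rewrite hP.
  have [s' [e' [ok' S' st']]] := @scan_loop u (e :: P) _ okp' HF (deg u) 0 _ _ (subn0 _)
     (okp : okS (MArrive, false, P)) st.
  rewrite filter_noskip in S' st'; last by rewrite /= hP; lia.
  set sc := scan _ _ in S' st'.
  have E : isB_report G r d1 d2 u = (~~ sc.1, sc.2).
    rewrite /isB_report cu /sc (@scan_ext _ (wrap u (fun q => bnode_test G r d1 d2 (nbr u q)))); last first.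
      by move=> q; rewrite /wrap.
    by case: (scan _ _).
  rewrite E /=.
  have st'' : astep s' (deg u, col u, e') = ((MBack (~~ sc.1), false, P), AMove e).
    by rewrite st' /found_act /fin_scan /= hP eqxx; case: sc.1.
  have S2 := Steps_one ok' st''.
  rewrite /u /e nbr_ent // ent_ent // in S2.
  exact: Steps_trans S' S2.
have st : astep (MArrive, false, P) (deg u, col u, Some e) = ((MBack false, false, P), AMove e).
  by rewrite /= n0 n1 hP eqxx cu.
have S2 := Steps_one (okp : okS (MArrive, false, P)) st.
rewrite /u /e nbr_ent // ent_ent // in S2.
by rewrite /isB_report cu.
Qed.

Lemma DFS_child k : forall v p P, size P + k = d1 -> 0 < size P -> okP P -> p < deg v ->
  Steps (MArrive, false, P) (nbr v p) (Some (ent v p))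
    ((wls G r d1 d2 (isB_report G r d1 d2) d1 k (nbr v p) (Some (ent v p))).2 ++ [:: ent v p])
    (MBack (wls G r d1 d2 (isB_report G r d1 d2) d1 k (nbr v p) (Some (ent v p))).1, false, P)
    v (Some p).
Proof.
elim: k => [|k IH] v p P hP hP0 okp pv.
  by apply: U_child => //; lia.
set w := nbr v p; set e := ent v p.
have n0 : (size P == 0) = false by apply/negbTE; lia.
have n1 : (size P < d1) = true by lia.
have nk : (k.+1 != d1) = true by lia.
rewrite [wls _ _ _ _ _ _ k.+1 _ _]/= nk andbT.
case cw: (col w).
  have st : astep (MArrive, false, P) (deg w, col w, Some e) = ((MBack false, false, P), AMove e).
    by rewrite /= n0 n1 cw.
  have S2 := Steps_one (okp : okS (MArrive, false, P)) st.
  by rewrite /w /e nbr_ent // ent_ent // in S2.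
have okp' : okP (e :: P) by apply: okP_cons => //; lia.
have st : astep (MArrive, false, P) (deg w, col w, Some e) = cont_scan d1 (e :: P) (deg w) 0.
  by rewrite /= n0 n1 cw.
have HF : forall q, q < deg w -> ~~ skipP d1 (e :: P) q ->
   Steps (MArrive, false, e :: P) (nbr w q) (Some (ent w q))
     ((wls G r d1 d2 (isB_report G r d1 d2) d1 k (nbr w q) (Some (ent w q))).2 ++ [:: ent w q])
     (MBack (wls G r d1 d2 (isB_report G r d1 d2) d1 k (nbr w q) (Some (ent w q))).1, false, e :: P)
     w (Some q).
  by move=> q qw _; apply: IH => //=; lia.
have [s' [e' [ok' S' st']]] := @scan_loop w (e :: P) _ okp' HF (deg w) 0 _ _ (subn0 _)
   (okp : okS (MArrive, false, P)) st.
have fl : [seq q <- iota 0 (deg w) | ~~ skipP d1 (e :: P) q] = [seq q <- ports G w | Some q != Some e].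
  apply: eq_filter => q; rewrite /skipP /=.
  have -> : (2 <= (size P).+1 <= d1) = true by lia.
  by [].
rewrite fl in S' st'.
set sc := scan _ _ in S' st'.
have E : scan (fun q => let w0 := nbr w q in let e0 := ent w q in
           let (b, ms) := wls G r d1 d2 (isB_report G r d1 d2) d1 k w0 (Some e0) in
           (b, q :: ms ++ [:: e0])) [seq q <- ports G w | Some q != Some e] = sc.
  rewrite /sc; apply: scan_ext => q; rewrite /wrap /=.
  by case: (wls G r d1 d2 (isB_report G r d1 d2) d1 k (nbr w q) (Some (ent w q))).
rewrite E.
have st'' : astep s' (deg w, col w, e') = ((MBack sc.1, false, P), AMove e).
  have h1 : ((size P).+1 == d1.+1) = false by apply/negbTE; lia.
  by rewrite st' /found_act /fin_scan /= h1; case: sc.1.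
have S2 := Steps_one ok' st''.
rewrite /w /e nbr_ent // ent_ent // in S2.
exact: Steps_trans S' S2.
Qed.

Lemma wls_unfold f l k v i : 0 < k ->
  wls G r d1 d2 f l k v i =
  if col v && (k != l) then (false, [::])
  else scan (fun q => let w := nbr v q in let e := ent v q in
               let (b, ms) := wls G r d1 d2 f l k.-1 w (Some e) in (b, q :: ms ++ [:: e]))
            [seq q <- ports G v | Some q != i].
Proof. by case: k. Qed.

Lemma filter_None v : [seq q <- ports G v | Some q != None] = ports G v.
Proof. by rewrite (@eq_filter _ _ predT) ?filter_predT. Qed.

Lemma Y_child x p : p < deg x ->
  Steps (MArrive, false, [::]) (nbr x p) (Some (ent x p))
    ((CorD_report G r d1 d2 (nbr x p)).2 ++ [:: ent x p])
    (MBack (CorD_report G r d1 d2 (nbr x p)).1, false, [::]) x (Some p).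
Proof.
move=> px; set y := nbr x p; set e := ent x p.
have ok0 : okS (MArrive, false, [::]) by [].
case cy: (col y); last first.
  have st : astep (MArrive, false, [::]) (deg y, col y, Some e) = ((MBack false, false, [::]), AMove e).
    by rewrite /= cy.
  have S2 := Steps_one ok0 st.
  rewrite /y /e nbr_ent // ent_ent // in S2.
  by rewrite /CorD_report cy.
have ok1 : okP [:: e] by apply: okP_cons.
have st : astep (MArrive, false, [::]) (deg y, col y, Some e) = cont_bt d1 [:: e] true (deg y) 0.
  by rewrite /= cy.
have [s1 [e1 [ok1' S1 st1]]] := @bt_loop y [:: e] ok1 (deg y) 0 true _ _ (subn0 _) ok0 st.
rewrite /CorD_report cy /Is_B /bnode_test.
have Eb : true && all (fun p => col (nbr y p)) (iota 0 (deg y)) = isBnode G r d1 d2 y.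
  by rewrite /isBnode cy.
rewrite Eb in st1.
case bn: (isBnode G r d1 d2 y) st1 => st1 /=; rewrite [fin_bt _ _ _ _]/= in st1.
  have S2 := Steps_one ok1' st1.
  rewrite /y /e nbr_ent // ent_ent // in S2.
  exact: Steps_trans S1 S2.
have HF : forall q, q < deg y -> ~~ skipP d1 [:: e] q ->
   Steps (MArrive, false, [:: e]) (nbr y q) (Some (ent y q))
     ((wls G r d1 d2 (isB_report G r d1 d2) d1 d1.-1 (nbr y q) (Some (ent y q))).2 ++ [:: ent y q])
     (MBack (wls G r d1 d2 (isB_report G r d1 d2) d1 d1.-1 (nbr y q) (Some (ent y q))).1, false, [:: e])
     y (Some q).
  by move=> q qy _; apply: DFS_child => //=; lia.
have [s' [e' [ok' S' st']]] := @scan_loop y [:: e] _ ok1 HF (deg y) 0 _ _ (subn0 _) ok1' st1.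
rewrite filter_noskip in S' st' => //.
set sc := scan _ _ in S' st'.
have E : wls G r d1 d2 (isB_report G r d1 d2) d1 d1 y None = sc.
  rewrite wls_unfold; last by lia.
  rewrite eqxx andbF filter_None /sc; apply: scan_ext => q; rewrite /wrap /=.
  by case: (wls G r d1 d2 (isB_report G r d1 d2) d1 d1.-1 (nbr y q) (Some (ent y q))).
rewrite E.
have st'' : astep s' (deg y, col y, e') = ((MBack sc.1, false, [::]), AMove e).
  have h1 : (1 == d1.+1) = false by apply/negbTE; lia.
  by rewrite st' /found_act /fin_scan /= h1; case: sc.1.
have S2 := Steps_one ok' st''.
rewrite /y /e nbr_ent // ent_ent // in S2.
have := Steps_trans (Steps_trans S1 S') S2.
rewrite -catA.
clear E S1 S2 S' st' st''; by case: sc => [[] m1] /=; rewrite -catA.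
Qed.

Lemma X_top x e0 : exists s' e', [/\ okS s',
  Steps (MStart, false, [::]) x e0 (C_or_D G r d1 d2 x).2 s' x e' &
  astep s' (deg x, col x, e') = (st_halt, AHalt (C_or_D G r d1 d2 x).1)].
Proof.
have ok0 : okS (MStart, false, [::]) by [].
have okp : okP [::] by [].
have st : astep (MStart, false, [::]) (deg x, col x, e0) = cont_bt d1 [::] (col x) (deg x) 0 by [].
have [s1 [e1 [ok1 S1 st1]]] := @bt_loop x [::] okp (deg x) 0 (col x) _ _ (subn0 _) ok0 st.
rewrite /C_or_D /bnode_test.
have E0 : col x && all (fun p0 => col (nbr x p0)) (iota 0 (deg x)) = isBnode G r d1 d2 x by [].
rewrite E0 in st1.
case bn: (isBnode G r d1 d2 x) st1 => st1; rewrite [fin_bt _ _ _ _]/= in st1.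
  have HF : forall q, q < deg x -> ~~ skipP d1 [::] q ->
     Steps (MArrive, false, [::]) (nbr x q) (Some (ent x q))
       ((CorD_report G r d1 d2 (nbr x q)).2 ++ [:: ent x q])
       (MBack (CorD_report G r d1 d2 (nbr x q)).1, false, [::]) x (Some q).
    by move=> q qx _; apply: Y_child.
  have [s' [e' [ok' S' st']]] := @scan_loop x [::] _ okp HF (deg x) 0 _ _ (subn0 _) ok1 st1.
  rewrite filter_noskip in S' st' => //.
  have E : wls G r d1 d2 (CorD_report G r d1 d2) 1 1 x None =
      scan (wrap x (fun q => CorD_report G r d1 d2 (nbr x q))) (iota 0 (deg x)).
    rewrite wls_unfold // eqxx andbF filter_None; apply: scan_ext => q; rewrite /wrap /=.
    by case: (CorD_report G r d1 d2 (nbr x q)).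
  rewrite E; have S2 := Steps_trans S1 S'; move: S2 st'.
  clear E S'; case: (scan _ _) => found m1 S3 st3.
  exists s', e'; split => //.
  by rewrite st3 /found_act /fin_scan /=; case: found S3 st3.
by exists s1, e1; split.
Qed.

End Sim.
Set Implicit Arguments. Unset Strict Implicit.

Fixpoint pbits (p : positive) : seq bool :=
  match p with xI p => true :: pbits p | xO p => false :: pbits p | xH => [::] end.
Fixpoint unpbits (l : seq bool) : positive :=
  match l with [::] => xH | b :: l => (if b then xI else xO) (unpbits l) end.

Lemma unpbitsK p : unpbits (pbits p) = p.
Proof. by elim: p => //= p ->. Qed.

Lemma pbits_size p : 2 ^ size (pbits p) <= Pos.to_nat p.
Proof.
elim: p => [p IH|p IH|] /=.
- rewrite Pos2Nat.inj_xI expnS; lia.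
- rewrite Pos2Nat.inj_xO expnS; lia.
- by rewrite Pos2Nat.inj_1.
Qed.

Definition bits (n : nat) : seq bool := pbits (Pos.of_succ_nat n).
Definition unbits (l : seq bool) : nat := (Pos.to_nat (unpbits l)).-1.

Lemma unbitsK n : unbits (bits n) = n.
Proof. by rewrite /unbits /bits unpbitsK SuccNat2Pos.id_succ. Qed.

Lemma bits_size n N : n < N -> size (bits n) < nbits N.
Proof.
move=> nN; have h1 := pbits_size (Pos.of_succ_nat n).
rewrite SuccNat2Pos.id_succ in h1.
have h2 := @trunc_log_ltn 2 N (isT : 1 < 2).
have : 2 ^ size (bits n) < 2 ^ (trunc_log 2 N).+1.
  by apply: leq_ltn_trans h1 _; apply: leq_ltn_trans h2.
by rewrite ltn_exp2l.
Qed.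

Definition enc1 (n : nat) : seq bool :=
  flatten [seq [:: true; b] | b <- bits n] ++ [:: false; true].
Definition encN (ns : seq nat) : seq bool := flatten (map enc1 ns) ++ [:: false; false].

Fixpoint dec (l : seq bool) (cur : seq bool) : seq (seq bool) :=
  match l with
  | true :: b :: l' => dec l' (rcons cur b)
  | false :: true :: l' => cur :: dec l' [::]
  | _ => [::]
  end.

Lemma dec_bits s rest cur :
  dec (flatten [seq [:: true; b] | b <- s] ++ rest) cur = dec rest (cur ++ s).
Proof.
elim: s cur => [|b s IH] cur /=; first by rewrite cats0.
by rewrite IH cat_rcons.
Qed.

Lemma dec_encN ns : dec (encN ns) [::] = map bits ns.
Proof.
elim: ns => [|n ns IH] //=.
by rewrite /encN /= /enc1 -!catA dec_bits /= -IH.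
Qed.

Definition decN (l : seq bool) : seq nat := map unbits (dec l [::]).

Lemma decN_encN ns : decN (encN ns) = ns.
Proof. by rewrite /decN dec_encN -map_comp (eq_map unbitsK) map_id. Qed.

Lemma size_flat_bits s : size (flatten [seq [:: true; b] | b <- s]) = 2 * size s.
Proof. by elim: s => //= b s IH; rewrite IH; lia. Qed.

Lemma enc1_size n : size (enc1 n) = 2 * size (bits n) + 2.
Proof. by rewrite /enc1 size_cat size_flat_bits. Qed.

Definition mcode (m : mode) : nat :=
  match m with MStart => 0 | MProbe => 1 | MPBack => 2 | MArrive => 3
  | MBack false => 4 | MBack true => 5 end.
Definition mdecode (n : nat) : mode :=
  match n with 0 => MStart | 1 => MProbe | 2 => MPBack | 3 => MArrive
  | 4 => MBack false | _ => MBack true end.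

Definition encS (s : state) : seq bool :=
  let: (m, acc, P) := s in encN ((acc + (mcode m).*2) :: P).
Definition decS (l : seq bool) : state :=
  match decN l with
  | h :: P => (mdecode h./2, odd h, P)
  | [::] => st_halt
  end.

Lemma decS_encS s : decS (encS s) = s.
Proof.
case: s => [[m acc] P]; rewrite /decS /encS decN_encN half_bit_double.
rewrite oddD odd_double addbF oddb.
by case: m => //; case.
Qed.

Definition agentA (d1 : nat) : agent :=
  Agent (encS (MStart, false, [::]))
        (fun m i => let (s', act) := astep d1 (decS m) i in (encS s', act)).

Lemma encS_size d1 N s : 2 <= d1 -> size s.2 <= d1.+2 -> all (fun n => n < N) s.2 ->
  size (encS s) <= 20 * (d1 * nbits N).
Proof.
case: s => [[m acc] P] /= hd hs ha.
rewrite /encN size_cat /= size_cat /= enc1_size.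
have hh : size (bits (acc + (mcode m).*2)) < nbits 16.
  apply: bits_size; case: acc; case: m => //; case => //.
have hN : 0 < nbits N by [].
have h16 : nbits 16 = 5 by [].
have hP : size (flatten (map enc1 P)) <= size P * (2 * nbits N).
  elim: P {hs} ha => [|n P IH] //= /andP[hn ha].
  rewrite size_cat enc1_size; have := bits_size hn; have := IH ha; nia.
rewrite h16 in hh; nia.
Qed.

Arguments astep : simpl never.
Section Run.
Variables (G : pgraph) (r : pV G) (d1 d2 : nat).
Local Notation V := (pV G).
Local Notation deg := (pdeg G).
Local Notation col := (black G r d1 d2).

Lemma arun_move fuel m v e s1 p : astep d1 (decS m) (deg v, col v, e) = (s1, AMove p) ->
  arun G col (agentA d1) fuel.+1 m v e =
  let '(ms, ps, res) := arun G col (agentA d1) fuel (encS s1) (pnbr G v p) (Some (pent G v p)) in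
  (m :: ms, p :: ps, res).
Proof. by move=> st /=; rewrite st. Qed.

Lemma run_Steps (Bd : nat) s v e ps s' v' e' s'' a :
  (forall t, okS G d1 t -> size (encS t) <= Bd) ->
  Steps r d1 d2 s v e ps s' v' e' -> okS G d1 s' -> okS G d1 s'' ->
  astep d1 s' (deg v', col v', e') = (s'', AHalt a) ->
  exists mems, arun G col (agentA d1) (size ps).+1 (encS s) v e = (mems, ps, Some a) /\
    all (fun m => size m <= Bd) mems.
Proof.
move=> HB; elim=> {s v e ps s' v' e'}.
  move=> s v e ok ok'' st; exists [:: encS s; encS s'']; split.
    by rewrite /= decS_encS st.
  by rewrite /= !HB.
move=> s v e s1 p ps s2 v2 e2 oks st _ IH ok2 ok'' st2.
have [mems [E Hm]] := IH ok2 ok'' st2.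
exists (encS s :: mems); split; last by rewrite /= HB.
have st' : astep d1 (decS (encS s)) (deg v, col v, e) = (s1, AMove p) by rewrite decS_encS.
by rewrite (arun_move _ st') E.
Qed.

End Run.

Theorem lemma3 :
  exists (c_mem c_mov : nat) (A : nat -> nat -> agent),
  forall (G : pgraph) (r : pV G) (d1 d2 : nat) (x : pV G),
    connected G ->
    2 <= d1 -> d1 <= d2./2 ->
    d1 + d2 + 1 <= diam G ->
    x != r ->
    inC G r d1 d2 x || inD G r d1 d2 x ->
    let res := C_or_D G r d1 d2 x in
    [/\ res.1 = AnsC <-> inC G r d1 d2 x,
        res.1 = AnsD <-> inD G r d1 d2 x,
        follow G x res.2 = x,
        size res.2 <= c_mov * maxdeg G ^ (d1 + 3) &
        forall e0 : option nat, exists fuel mems,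
          arun G (black G r d1 d2) (A d1 d2) fuel (a_init (A d1 d2)) x e0
            = (mems, res.2, Some res.1)
          /\ all (fun m => size m <= c_mem * (d1 * nbits (maxdeg G))) mems].
Proof.
exists 20, 12, (fun d1 _ => agentA d1).
move=> G r d1 d2 x C H1 H2 _ xr Hx res.
have HB : forall t, okS G d1 t -> size (encS t) <= 20 * (d1 * nbits (maxdeg G)).
  by move=> t /andP[h1 h2]; apply: encS_size.
have [s' [e' [ok' S' st']]] := X_top r d2 H1 x None.
have Hres : (inC G r d1 d2 x -> res.1 = AnsC) /\ (inD G r d1 d2 x -> res.1 = AnsD).
  split => h.
    exact: (CorD_C C H1 H2 (eqP h) xr).
  exact: (CorD_D C H1 H2 (eqP h)).
have excl : inC G r d1 d2 x -> inD G r d1 d2 x -> False.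
  by rewrite /inC /inD => /eqP ->.
split.
- split; first (move=> h; case/orP: Hx => // hD; by move: h; rewrite (proj2 Hres hD)).
  exact: (proj1 Hres).
- split; first (move=> h; case/orP: Hx => // hC; by move: h; rewrite (proj1 Hres hC)).
  exact: (proj2 Hres).
- exact: Steps_follow S'.
- apply: CorD_size; lia.
move=> e0; have [s2 [e2 [ok2 S2 st2]]] := X_top r d2 H1 x e0.
have [mems [E Hm]] := run_Steps HB S2 ok2 (isT : okS G d1 st_halt) st2.
by exists (size res.2).+1, mems.
Qed.
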